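(* Let $\epsilon>0$. There exist constants $K,c>0$ depending only on $\epsilon$ such that for every $n$ and every $\epsilon$-balanced random digraph $\Gamma(n)$ on $[n]$, \[\mathbb{P}\big(\Gamma(n)\text{ is not strongly connected}\big)\le K e^{-cn}.\]
   Context: Digraphs may have multiple edges (and loops). $\deg(i,j)\in\mathbb{Z}_{\ge0}$ is the number of edges from $i$ to $j$. A digraph is strongly connected if there is a directed path from every vertex to every other vertex. A random variable $y$ in a ring $T$ is $\epsilon$-balanced if for every maximal ideal $\mathfrak p$ of $T$ and every $r\in T/\mathfrak p$, $\mathbb{P}(y\equiv r\bmod\mathfrak p)\le1-\epsilon$. A random digraph on $[n]$ is $\epsilon$-balanced if the $\deg(i,j)$ for ordered pairs $i\ne j$ are independent $\epsilon$-balanced random variables in $\mathbb{Z}$. *)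

(* Defs.v *)
From Stdlib Require Import Reals ZArith Znumtheory List Classical ClassicalEpsilon.
Open Scope R_scope.

Definition Zrange (N : nat) : list Z :=
  map (fun k => (Z.of_nat k - Z.of_nat N)%Z) (seq 0 (2 * N + 1)).

Definition sumZ (N : nat) (f : Z -> R) : R :=
  fold_right Rplus 0 (map f (Zrange N)).

Definition indic (P : Prop) : R :=
  if excluded_middle_informative P then 1 else 0.

Definition is_pmf (f : Z -> R) : Prop :=
  (forall z, 0 <= f z) /\ Un_cv (fun N => sumZ N f) 1.

(* P(y in A) <= b for y with pmf f, where A : Z -> Prop.  Since the terms are
   nonnegative, this is equivalent to: every partial sum is <= b. *)
Definition probZ_le (f : Z -> R) (A : Z -> Prop) (b : R) : Prop :=
  forall N, sumZ N (fun z => f z * indic (A z)) <= b.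

(* eps-balanced random variable in Z: maximal ideals of Z are pZ, p prime;
   residues mod p are represented by r with 0 <= r < p. *)
Definition eps_balanced (eps : R) (f : Z -> R) : Prop :=
  forall p r : Z, prime p -> (0 <= r < p)%Z ->
    probZ_le f (fun z => Z.modulo z p = r) (1 - eps).

Definition offdiag_pairs (n : nat) : list (nat * nat) :=
  flat_map (fun i => flat_map (fun j => if Nat.eqb i j then nil else (i, j) :: nil)
                              (seq 0 n)) (seq 0 n).

(* A degree function: deg i j = number of edges from i to j. *)
Definition degfun := nat -> nat -> Z.

Definition upd (x : degfun) (i j : nat) (z : Z) : degfun :=
  fun a b => if andb (Nat.eqb a i) (Nat.eqb b j) then z else x a b.

Inductive reach (n : nat) (x : degfun) : nat -> nat -> Prop :=
| reach_refl : forall i, (i < n)%nat -> reach n x i i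
| reach_step : forall i k j, (i < n)%nat -> (k < n)%nat ->
    (1 <= x i k)%Z -> reach n x k j -> reach n x i j.

Definition strongly_connected (n : nat) (x : degfun) : Prop :=
  forall i j, (i < n)%nat -> (j < n)%nat -> reach n x i j.

(* Partial (boxed) expectation of F under the product measure of the
   independent pmfs mu i j, for (i,j) in ps, each coordinate in [-N, N]. *)
Fixpoint box_sum (mu : nat -> nat -> Z -> R) (N : nat) (ps : list (nat * nat))
         (F : degfun -> R) (x : degfun) : R :=
  match ps with
  | nil => F x
  | (i, j) :: ps' =>
      sumZ N (fun z => mu i j z * box_sum mu N ps' F (upd x i j z))
  end.

(* P(event) <= b for the random digraph whose off-diagonal degrees are
   independent with pmfs mu i j (loops, i.e. the diagonal, are set to 0;
   they do not affect strong connectivity).  P(event) is the supremum of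
   the boxed partial sums, so "<= b" means every partial sum is <= b. *)
Definition prob_digraph_le (n : nat) (mu : nat -> nat -> Z -> R)
           (E : degfun -> Prop) (b : R) : Prop :=
  forall N, box_sum mu N (offdiag_pairs n) (fun x => indic (E x)) (fun _ _ => 0%Z) <= b.

Definition eps_balanced_digraph (eps : R) (n : nat) (mu : nat -> nat -> Z -> R) : Prop :=
  forall i j, (i < n)%nat -> (j < n)%nat -> i <> j ->
    is_pmf (mu i j) /\ (forall z, (z < 0)%Z -> mu i j z = 0) /\ eps_balanced eps (mu i j).

(* Main.v *)
Require Import Defs.
From Stdlib Require Import Reals ZArith Znumtheory List Classical ClassicalEpsilon FunctionalExtensionality Lia Lra Permutation.
Open Scope R_scope.

Definition lsum {A} (l : list A) (f : A -> R) : R := fold_right Rplus 0 (map f l).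

Lemma sumZ_lsum N f : sumZ N f = lsum (Zrange N) f.
Proof. reflexivity. Qed.

Lemma lsum_ext {A} (l : list A) f g : (forall a, f a = g a) -> lsum l f = lsum l g.
Proof. intro H; induction l; simpl; auto. unfold lsum in *; simpl; rewrite H, IHl; auto. Qed.

Lemma lsum_le {A} (l : list A) f g : (forall a, f a <= g a) -> lsum l f <= lsum l g.
Proof. intro H; induction l; unfold lsum in *; simpl. lra. specialize (H a); lra. Qed.

Lemma lsum_nonneg {A} (l : list A) f : (forall a, 0 <= f a) -> 0 <= lsum l f.
Proof. intro H; induction l; unfold lsum in *; simpl. lra. specialize (H a); lra. Qed.

Lemma lsum_scal {A} (l : list A) c f : lsum l (fun a => c * f a) = c * lsum l f.
Proof. induction l; unfold lsum in *; simpl. ring. rewrite IHl; ring. Qed.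

Lemma lsum_plus {A} (l : list A) f g : lsum l (fun a => f a + g a) = lsum l f + lsum l g.
Proof. induction l; unfold lsum in *; simpl. ring. rewrite IHl; ring. Qed.

Lemma lsum_zero {A} (l : list A) : lsum l (fun _ => 0) = 0.
Proof. induction l; unfold lsum in *; simpl. ring. rewrite IHl; ring. Qed.

Lemma lsum_const {A} (l : list A) c : lsum l (fun _ => c) = c * INR (length l).
Proof. induction l; unfold lsum in *; simpl length. simpl; ring. rewrite S_INR. simpl. rewrite IHl; ring. Qed.

Lemma lsum_swap {A B} (l1 : list A) (l2 : list B) f :
  lsum l1 (fun a => lsum l2 (fun b => f a b)) = lsum l2 (fun b => lsum l1 (fun a => f a b)).
Proof.
  induction l1. unfold lsum at 1; simpl. symmetry; apply lsum_zero.
  unfold lsum at 1; simpl. fold (lsum l1 (fun a => lsum l2 (fun b => f a b))).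
  rewrite IHl1. rewrite <- lsum_plus. apply lsum_ext; intro b. reflexivity.
Qed.

Lemma lsum_in_le {A} (l : list A) f a : In a l -> (forall b, 0 <= f b) -> f a <= lsum l f.
Proof.
  intros Hin H; induction l; simpl in Hin. contradiction.
  unfold lsum in *; simpl. destruct Hin as [<-|Hin].
  - pose proof (lsum_nonneg l f H); unfold lsum in *; lra.
  - specialize (IHl Hin); specialize (H a0); lra.
Qed.

Lemma Zrange_S N : Zrange (S N) =
  ((- Z.of_nat (S N))%Z :: Zrange N ++ (Z.of_nat (S N) :: nil))%list.
Proof.
  unfold Zrange. replace (2 * S N + 1)%nat with (S (S (2 * N + 1))) by lia.
  rewrite seq_S. simpl seq. simpl map. f_equal.
  rewrite map_app. simpl map. f_equal.
  - rewrite <- seq_shift, map_map. apply map_ext. intro k. lia.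
  - f_equal. rewrite <- Pos2Z.add_pos_neg, <- Pos2Z.opp_pos, !Zpos_P_of_succ_nat. lia.
Qed.

Lemma sumZ_S N f : sumZ (S N) f = f (- Z.of_nat (S N))%Z + sumZ N f + f (Z.of_nat (S N)).
Proof.
  rewrite !sumZ_lsum, Zrange_S. unfold lsum. simpl. rewrite map_app, fold_right_app.
  simpl. set (c := f (Z.of_nat (S N))).
  assert (forall l, fold_right Rplus (c + 0) l = fold_right Rplus 0 l + c).
  { induction l; simpl; [ring| rewrite IHl; ring]. }
  rewrite H. unfold c. simpl Z.of_nat. ring.
Qed.

Lemma sumZ_mono N M f : (forall z, 0 <= f z) -> (N <= M)%nat -> sumZ N f <= sumZ M f.
Proof.
  intros Hf HNM; induction HNM. lra. rewrite sumZ_S. pose proof (Hf (- Z.of_nat (S m))%Z).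
  pose proof (Hf (Z.of_nat (S m))). lra.
Qed.

Lemma pmf_mass_le f N : is_pmf f -> sumZ N f <= 1.
Proof.
  intros [Hf Hcv]. destruct (Rle_lt_dec (sumZ N f) 1) as [h|h]; auto.
  exfalso. destruct (Hcv (sumZ N f - 1)) as [N0 HN0]. lra.
  specialize (HN0 (max N N0) ltac:(lia)). unfold R_dist in HN0.
  pose proof (sumZ_mono N (max N N0) f Hf ltac:(lia)).
  pose proof (Rle_abs (sumZ (max N N0) f - 1)). lra.
Qed.

Lemma sumZ_ext N f g : (forall a, f a = g a) -> sumZ N f = sumZ N g.
Proof. apply lsum_ext. Qed.
Lemma sumZ_le N f g : (forall a, f a <= g a) -> sumZ N f <= sumZ N g.
Proof. apply lsum_le. Qed.
Lemma sumZ_nonneg N f : (forall a, 0 <= f a) -> 0 <= sumZ N f.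
Proof. apply lsum_nonneg. Qed.
Lemma sumZ_scal N c f : sumZ N (fun a => c * f a) = c * sumZ N f.
Proof. apply lsum_scal. Qed.
Lemma sumZ_swap N M f :
  sumZ N (fun a => sumZ M (fun b => f a b)) = sumZ M (fun b => sumZ N (fun a => f a b)).
Proof. apply lsum_swap. Qed.
Lemma sumZ_lsum_swap {A} N (l : list A) f :
  sumZ N (fun a => lsum l (fun b => f a b)) = lsum l (fun b => sumZ N (fun a => f a b)).
Proof. apply lsum_swap. Qed.
Section Box.
Variable mu : nat -> nat -> Z -> R.
Variable N : nat.
Notation box := (box_sum mu N).

Lemma box_ext ps F G x : (forall y, F y = G y) -> box ps F x = box ps G x.
Proof.
  revert x; induction ps as [|[a b] ps IH]; intros x H; simpl. auto.
  apply sumZ_ext; intro z. rewrite IH; auto.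
Qed.

Lemma upd_same x a b z w : upd (upd x a b z) a b w = upd x a b w.
Proof.
  apply functional_extensionality; intro c; apply functional_extensionality; intro d.
  unfold upd. destruct (andb (Nat.eqb c a) (Nat.eqb d b)); auto.
Qed.

Lemma upd_comm x a b c d z w : (a <> c \/ b <> d) ->
  upd (upd x a b z) c d w = upd (upd x c d w) a b z.
Proof.
  intro H.
  apply functional_extensionality; intro u; apply functional_extensionality; intro v.
  unfold upd. destruct (Nat.eqb u a) eqn:E1, (Nat.eqb v b) eqn:E2, (Nat.eqb u c) eqn:E3, (Nat.eqb v d) eqn:E4;
    simpl; auto.
  apply Nat.eqb_eq in E1, E2, E3, E4. exfalso; lia.
Qed.

Lemma box_perm ps ps' : Permutation ps ps' -> forall F x, box ps F x = box ps' F x.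
Proof.
  induction 1 as [| [a b] l l' H IH | [a b] [c d] l | l l' l'' H1 IH1 H2 IH2]; intros F x.
  - reflexivity.
  - simpl. apply sumZ_ext; intro z. rewrite IH; auto.
  - simpl. 
    destruct (Nat.eq_dec a c) as [Hac|Hac]; [destruct (Nat.eq_dec b d) as [Hbd|Hbd]|].
    + subst c d. apply sumZ_ext; intro z. rewrite <- !sumZ_scal. apply sumZ_ext; intro w.
      rewrite !upd_same. ring.
    + transitivity (sumZ N (fun z => sumZ N (fun w =>
         mu c d z * (mu a b w * box_sum mu N l F (upd (upd x c d z) a b w))))).
      { apply sumZ_ext; intro z. rewrite <- sumZ_scal. reflexivity. }
      rewrite sumZ_swap. apply sumZ_ext; intro w. rewrite <- sumZ_scal. apply sumZ_ext; intro z.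
      rewrite (upd_comm x c d a b) by lia. ring.
    + transitivity (sumZ N (fun z => sumZ N (fun w =>
         mu c d z * (mu a b w * box_sum mu N l F (upd (upd x c d z) a b w))))).
      { apply sumZ_ext; intro z. rewrite <- sumZ_scal. reflexivity. }
      rewrite sumZ_swap. apply sumZ_ext; intro w. rewrite <- sumZ_scal. apply sumZ_ext; intro z.
      rewrite (upd_comm x c d a b) by lia. ring.
  - rewrite IH1, IH2; auto.
Qed.

Lemma box_app ps1 ps2 F x : box (ps1 ++ ps2) F x = box ps1 (box ps2 F) x.
Proof.
  revert x; induction ps1 as [|[a b] ps IH]; intros x; simpl. auto.
  apply sumZ_ext; intro z. rewrite IH; auto.
Qed.

Definition goodp (ps : list (nat * nat)) :=
  forall a b, In (a, b) ps -> (forall z, 0 <= mu a b z) /\ sumZ N (mu a b) <= 1.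

Lemma goodp_tl a b ps : goodp ((a,b) :: ps) -> goodp ps.
Proof. intros H c d Hin; apply H; simpl; auto. Qed.

Lemma box_mono ps F G x : goodp ps -> (forall y, F y <= G y) -> box ps F x <= box ps G x.
Proof.
  revert x; induction ps as [|[a b] ps IH]; intros x Hg H; simpl. auto.
  apply sumZ_le; intro z. apply Rmult_le_compat_l.
  apply (Hg a b); simpl; auto. apply IH; auto. eapply goodp_tl; eauto.
Qed.

Lemma box_nonneg ps F x : goodp ps -> (forall y, 0 <= F y) -> 0 <= box ps F x.
Proof.
  revert x; induction ps as [|[a b] ps IH]; intros x Hg H; simpl. auto.
  apply sumZ_nonneg; intro z. apply Rmult_le_pos.
  apply (Hg a b); simpl; auto. apply IH; auto. eapply goodp_tl; eauto.
Qed.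

Lemma box_const_le ps c x : goodp ps -> 0 <= c -> box ps (fun _ => c) x <= c.
Proof.
  revert x; induction ps as [|[a b] ps IH]; intros x Hg H; simpl. lra.
  destruct (Hg a b) as [H1 H2]; [simpl; auto|].
  apply Rle_trans with (sumZ N (fun z => c * mu a b z)).
  apply sumZ_le; intro z. rewrite Rmult_comm. apply Rmult_le_compat_r; auto.
  apply IH; auto. eapply goodp_tl; eauto.
  rewrite sumZ_scal.
  pose proof (Rmult_le_compat_l c _ _ H H2). lra.
Qed.

Lemma box_frame ps (g H : degfun -> R) x :
  (forall a b, In (a, b) ps -> forall y z, g (upd y a b z) = g y) ->
  box ps (fun y => g y * H y) x = g x * box ps H x.
Proof.
  revert x; induction ps as [|[a b] ps IH]; intros x Hg; simpl. auto.
  rewrite <- sumZ_scal. apply sumZ_ext; intro z.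
  rewrite IH. rewrite Hg by (simpl; auto). ring.
  intros; apply Hg; simpl; auto.
Qed.

Lemma box_lsum {A} ps (l : list A) (G : A -> degfun -> R) x :
  box ps (fun y => lsum l (fun t => G t y)) x = lsum l (fun t => box ps (G t) x).
Proof.
  revert x; induction ps as [|[a b] ps IH]; intros x; simpl. auto.
  rewrite <- sumZ_lsum_swap. apply sumZ_ext; intro z.
  rewrite IH. rewrite <- lsum_scal. reflexivity.
Qed.
End Box.
Lemma indic_or P Q : indic (P \/ Q) = indic P + indic Q - indic P * indic Q.
Proof.
  unfold indic. destruct (excluded_middle_informative (P \/ Q)), (excluded_middle_informative P),
    (excluded_middle_informative Q); try lra; tauto.
Qed.

Lemma indic_bounds P : 0 <= indic P <= 1.
Proof. unfold indic; destruct (excluded_middle_informative P); lra. Qed.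

Lemma lsum_lin1 {A} (l : list A) f g c :
  lsum l (fun w => f w * (c + g w - c * g w)) =
  c * lsum l f + lsum l (fun w => f w * g w) - c * lsum l (fun w => f w * g w).
Proof. induction l; unfold lsum in *; simpl. ring. rewrite IHl; ring. Qed.

Lemma lsum_lin2 {A} (l : list A) f g m b :
  lsum l (fun z => f z * (g z * m + b - g z * b)) =
  lsum l (fun z => f z * g z) * m + lsum l f * b - lsum l (fun z => f z * g z) * b.
Proof. induction l; unfold lsum in *; simpl. ring. rewrite IHl; ring. Qed.

Lemma fail_mass N (f1 f2 : Z -> R) e :
  0 <= e <= 1 ->
  (forall z, 0 <= f1 z) -> (forall z, 0 <= f2 z) ->
  sumZ N f1 <= 1 -> sumZ N f2 <= 1 ->
  sumZ N (fun z => f1 z * indic (z < 1)%Z) <= 1 - e ->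
  sumZ N (fun z => f2 z * indic (z < 1)%Z) <= 1 - e ->
  sumZ N (fun z => f1 z * sumZ N (fun w => f2 w * indic ((z < 1)%Z \/ (w < 1)%Z))) <= 1 - e ^ 2.
Proof.
  intros He H1 H2 M1 M2 A1 A2.
  set (b := sumZ N (fun w => f2 w * indic (w < 1)%Z)) in *.
  set (m2 := sumZ N f2) in *.
  rewrite (sumZ_ext N _ (fun z => f1 z * (indic (z < 1)%Z * m2 + b - indic (z < 1)%Z * b))).
  2:{ intro z. f_equal. rewrite (sumZ_ext N _ (fun w => f2 w * (indic (z < 1)%Z + indic (w < 1)%Z - indic (z < 1)%Z * indic (w < 1)%Z))).
      2:{ intro w. rewrite indic_or. reflexivity. }
      rewrite sumZ_lsum, lsum_lin1. unfold b, m2. rewrite !sumZ_lsum. ring. }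
  rewrite sumZ_lsum, lsum_lin2. rewrite <- !sumZ_lsum.
  set (a := sumZ N (fun z => f1 z * indic (z < 1)%Z)) in *.
  set (m1 := sumZ N f1) in *.
  assert (0 <= a). { apply sumZ_nonneg; intro z; pose proof (indic_bounds (z < 1)%Z); pose proof (H1 z); nra. }
  assert (0 <= b). { apply sumZ_nonneg; intro z; pose proof (indic_bounds (z < 1)%Z); pose proof (H2 z); nra. }
  assert (0 <= m2). { apply sumZ_nonneg; auto. }
  assert (0 <= m1). { apply sumZ_nonneg; auto. }
  assert (a * m2 <= a) by nra. assert (m1 * b <= b) by nra.
  assert ((1 - a) * (1 - b) >= e * e) by nra. simpl. nra.
Qed.

Section Block.
Variable mu : nat -> nat -> Z -> R.
Variable N : nat.
Variables i j : nat.
Variable e : R.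
Notation box := (box_sum mu N).

Definition D (k : nat) (y : degfun) : R := indic ((y i k < 1)%Z \/ (y k j < 1)%Z).
Definition blocks (ks : list nat) : list (nat * nat) := flat_map (fun k => (i,k) :: (k,j) :: nil) ks.
Definition Prod (ks : list nat) (y : degfun) : R := fold_right Rmult 1 (map (fun k => D k y) ks).

Lemma Prod_nonneg ks y : 0 <= Prod ks y.
Proof. unfold Prod in *; induction ks; simpl. lra. apply Rmult_le_pos; [apply indic_bounds | exact IHks]. Qed.

Definition goodb (ps : list (nat * nat)) :=
  forall a b, In (a, b) ps -> (forall z, 0 <= mu a b z) /\ sumZ N (mu a b) <= 1 /\
     sumZ N (fun z => mu a b z * indic (z < 1)%Z) <= 1 - e.

Lemma goodb_goodp ps : goodb ps -> goodp mu N ps.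
Proof. intros H a b Hin; destruct (H a b Hin) as [? [? ?]]; auto. Qed.

Lemma block_bound ks rest : 0 <= e <= 1 -> (forall k, In k ks -> k <> i) ->
  goodb (blocks ks ++ rest) -> NoDup (blocks ks ++ rest) ->
  forall x, box (blocks ks ++ rest) (Prod ks) x <= (1 - e ^ 2) ^ (length ks).
Proof.
  intros He. induction ks as [|k ks IH]; intros Hk Hg Hnd x.
  - simpl. unfold Prod; simpl. apply box_const_le. apply goodb_goodp; auto. lra.
  - simpl in Hg, Hnd |- *. set (L := blocks ks ++ rest) in *.
    assert (Hki : k <> i) by (apply Hk; simpl; auto).
    assert (Hg' : goodb L) by (intros a b Hin; apply Hg; simpl; auto).
    inversion Hnd as [|? ? Hn1 Hnd1]; subst. inversion Hnd1 as [|? ? Hn2 Hnd2]; subst.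
    assert (IH' : forall x, box L (Prod ks) x <= (1 - e ^ 2) ^ length ks).
    { apply IH; auto. intros; apply Hk; simpl; auto. }
    set (Q := (1 - e ^ 2) ^ length ks).
    assert (HQ : 0 <= Q). { unfold Q. apply pow_le. nra. }
    destruct (Hg i k) as [P1 [M1 A1]]; [simpl; auto|].
    destruct (Hg k j) as [P2 [M2 A2]]; [simpl; auto|].
    apply Rle_trans with (sumZ N (fun z => mu i k z * sumZ N (fun w => mu k j w * (indic ((z < 1)%Z \/ (w < 1)%Z) * Q)))).
    + apply sumZ_le; intro z. apply Rmult_le_compat_l; auto. apply sumZ_le; intro w.
      apply Rmult_le_compat_l; auto.
      change (Prod (k :: ks)) with (fun y => D k y * Prod ks y).
      rewrite box_frame.
      * replace (D k (upd (upd x i k z) k j w)) with (indic ((z < 1)%Z \/ (w < 1)%Z)).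
        2:{ unfold D, upd. rewrite !Nat.eqb_refl. simpl.
            destruct (Nat.eqb i k) eqn:E. apply Nat.eqb_eq in E; congruence. simpl. reflexivity. }
        apply Rmult_le_compat_l. apply indic_bounds. apply IH'.
      * intros a b Hin y z'. unfold D, upd.
        destruct (andb (Nat.eqb i a) (Nat.eqb k b)) eqn:E1.
        { apply Bool.andb_true_iff in E1; destruct E1 as [E1 E2]; apply Nat.eqb_eq in E1, E2; subst.
          exfalso; apply Hn1; simpl; auto. }
        destruct (andb (Nat.eqb k a) (Nat.eqb j b)) eqn:E2.
        { apply Bool.andb_true_iff in E2; destruct E2 as [E3 E4]; apply Nat.eqb_eq in E3, E4; subst.
          exfalso; apply Hn2; auto. }
        reflexivity.
    + rewrite (sumZ_ext N _ (fun z => Q * (mu i k z * sumZ N (fun w => mu k j w * indic ((z < 1)%Z \/ (w < 1)%Z))))).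
      2:{ intro z. rewrite <- sumZ_scal. rewrite <- sumZ_scal. rewrite <- sumZ_scal. apply sumZ_ext; intro w. ring. }
      rewrite sumZ_scal. simpl length. simpl. fold Q.
      pose proof (fail_mass N (mu i k) (mu k j) e He P1 P2 M1 M2 A1 A2).
      rewrite Rmult_comm. apply Rmult_le_compat_r; [exact HQ|]. simpl in H |- *. lra.
Qed.
End Block.
Lemma In_offdiag n a b : In (a, b) (offdiag_pairs n) <-> (a < n)%nat /\ (b < n)%nat /\ a <> b.
Proof.
  unfold offdiag_pairs. rewrite in_flat_map. split.
  - intros [i [Hi Hin]]. rewrite in_flat_map in Hin. destruct Hin as [j [Hj Hin]].
    apply in_seq in Hi, Hj. destruct (Nat.eqb i j) eqn:E; simpl in Hin. contradiction.
    destruct Hin as [Hin|[]]. inversion Hin; subst. apply Nat.eqb_neq in E. lia.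
  - intros [Ha [Hb Hab]]. exists a; split. apply in_seq; lia.
    rewrite in_flat_map. exists b; split. apply in_seq; lia.
    destruct (Nat.eqb a b) eqn:E. apply Nat.eqb_eq in E; contradiction. simpl; auto.
Qed.

Lemma NoDup_flat_map_gen {A B} (f : A -> list B) l :
  NoDup l -> (forall a, In a l -> NoDup (f a)) ->
  (forall a a' b, In a l -> In a' l -> In b (f a) -> In b (f a') -> a = a') ->
  NoDup (flat_map f l).
Proof.
  induction l as [|a l IH]; intros Hnd Hf Hd; simpl. constructor.
  inversion Hnd; subst. apply NoDup_app. apply Hf; simpl; auto.
  apply IH; auto. intros; apply Hf; simpl; auto. intros; eapply Hd; simpl; eauto.
  intros b Hb Hb'. apply in_flat_map in Hb'. destruct Hb' as [a' [Ha' Hb']].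
  assert (a = a') by (eapply Hd; simpl; eauto). subst; contradiction.
Qed.

Lemma NoDup_offdiag n : NoDup (offdiag_pairs n).
Proof.
  unfold offdiag_pairs. apply NoDup_flat_map_gen. apply seq_NoDup.
  - intros i _. apply NoDup_flat_map_gen. apply seq_NoDup.
    + intros j _. destruct (Nat.eqb i j). constructor. constructor. simpl; auto. constructor.
    + intros j j' b _ _ H1 H2. destruct (Nat.eqb i j); simpl in H1; [contradiction|].
      destruct (Nat.eqb i j'); simpl in H2; [contradiction|].
      destruct H1 as [<-|[]]; destruct H2 as [H2|[]]. congruence.
  - intros i i' b _ _ H1 H2. apply in_flat_map in H1, H2.
    destruct H1 as [j [_ H1]], H2 as [j' [_ H2]].
    destruct (Nat.eqb i j); simpl in H1; [contradiction|].
    destruct (Nat.eqb i' j'); simpl in H2; [contradiction|].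
    destruct H1 as [<-|[]]; destruct H2 as [H2|[]]. congruence.
Qed.

Lemma length_flat_map_le {A B} (f : A -> list B) l m :
  (forall a, (length (f a) <= m)%nat) -> (length (flat_map f l) <= length l * m)%nat.
Proof.
  intro H; induction l; simpl. lia. rewrite length_app. specialize (H a). lia.
Qed.

Lemma length_offdiag n : (length (offdiag_pairs n) <= n * n)%nat.
Proof.
  unfold offdiag_pairs. eapply Nat.le_trans. apply length_flat_map_le with (m := n).
  - intro i. eapply Nat.le_trans. apply length_flat_map_le with (m := 1%nat).
    intro j. destruct (Nat.eqb i j); simpl; lia. rewrite length_seq. lia.
  - rewrite length_seq. lia.
Qed.

Definition ksf (n i j : nat) : list nat :=
  filter (fun k => andb (negb (Nat.eqb k i)) (negb (Nat.eqb k j))) (seq 0 n).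

Lemma In_ksf n i j k : In k (ksf n i j) <-> (k < n)%nat /\ k <> i /\ k <> j.
Proof.
  unfold ksf. rewrite filter_In, in_seq. rewrite Bool.andb_true_iff, !Bool.negb_true_iff,
    !Nat.eqb_neq. lia.
Qed.

Lemma length_ksf n i j : (n - 2 <= length (ksf n i j))%nat.
Proof.
  unfold ksf. pose proof (filter_length (fun k => andb (negb (Nat.eqb k i)) (negb (Nat.eqb k j))) (seq 0 n)).
  rewrite length_seq in H.
  assert (length (filter (fun x => negb (andb (negb (Nat.eqb x i)) (negb (Nat.eqb x j)))) (seq 0 n)) <= length (i :: j :: nil))%nat.
  { clear H. apply NoDup_incl_length. apply NoDup_filter, seq_NoDup.
    intros k Hk. apply filter_In in Hk. destruct Hk as [_ Hk].
    destruct (Nat.eqb k i) eqn:E1. apply Nat.eqb_eq in E1; subst; simpl; auto.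
    destruct (Nat.eqb k j) eqn:E2. apply Nat.eqb_eq in E2; subst; simpl; auto.
    simpl in Hk. discriminate. }
  simpl in H0. lia.
Qed.

Definition peq_dec : forall p q : nat * nat, {p = q} + {p <> q}.
Proof. decide equality; apply Nat.eq_dec. Defined.

Lemma NoDup_blocks i j ks : NoDup ks -> (forall k, In k ks -> k <> i /\ k <> j) ->
  NoDup (blocks i j ks).
Proof.
  intros Hnd Hk. unfold blocks. apply NoDup_flat_map_gen; auto.
  - intros k Hin. destruct (Hk k Hin). constructor. simpl. intros [Hq|[]]. inversion Hq; lia.
    constructor. simpl; auto. constructor.
  - intros k k' b Hin Hin' H1 H2. destruct (Hk k Hin) as [Ha1 Ha2], (Hk k' Hin') as [Hb1 Hb2].
    simpl in H1, H2. destruct H1 as [<-|[<-|[]]]; destruct H2 as [H2|[H2|[]]]; inversion H2; subst; lia.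
Qed.

Lemma perm_split n i j : (i < n)%nat -> (j < n)%nat -> i <> j ->
  let bl := blocks i j (ksf n i j) in
  Permutation (offdiag_pairs n)
    (bl ++ filter (fun p => if in_dec peq_dec p bl then false else true) (offdiag_pairs n)) /\
  NoDup (bl ++ filter (fun p => if in_dec peq_dec p bl then false else true) (offdiag_pairs n)).
Proof.
  intros Hi Hj Hij bl.
  assert (Hnd : NoDup (bl ++ filter (fun p => if in_dec peq_dec p bl then false else true) (offdiag_pairs n))).
  { apply NoDup_app. apply NoDup_blocks. apply NoDup_filter, seq_NoDup.
    intros k Hk. apply In_ksf in Hk. lia.
    apply NoDup_filter, NoDup_offdiag.
    intros p Hp Hp'. apply filter_In in Hp'. destruct Hp' as [_ Hp'].
    destruct (in_dec peq_dec p bl); [discriminate|contradiction]. }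
  split; auto. apply NoDup_Permutation; auto. apply NoDup_offdiag.
  intros [a b]. rewrite in_app_iff, filter_In. split.
  - intro H. destruct (in_dec peq_dec (a, b) bl); auto.
  - intros [H|[H _]]; auto. unfold bl, blocks in H. apply in_flat_map in H.
    destruct H as [k [Hk H]]. apply In_ksf in Hk. apply In_offdiag.
    simpl in H. destruct H as [H|[H|[]]]; inversion H; subst; lia.
Qed.
Lemma lsum_le_in {A} (l : list A) f g : (forall a, In a l -> f a <= g a) -> lsum l f <= lsum l g.
Proof. intro H; induction l; unfold lsum in *; simpl. lra.
  pose proof (H a (or_introl eq_refl)). assert (IH := IHl (fun b Hb => H b (or_intror Hb))). lra. Qed.

Lemma Prod_one i j ks y : (forall k, In k ks -> D i j k y = 1) -> Prod i j ks y = 1.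
Proof. induction ks; intro H; unfold Prod in *; simpl. auto.
  rewrite H by (simpl; auto). rewrite IHks. ring. intros; apply H; simpl; auto. Qed.

Lemma indic_notSC_le n y :
  indic (~ strongly_connected n y) <=
  lsum (offdiag_pairs n) (fun p => Prod (fst p) (snd p) (ksf n (fst p) (snd p)) y).
Proof.
  unfold indic at 1. destruct (excluded_middle_informative (~ strongly_connected n y)) as [Hns|Hs].
  2:{ apply lsum_nonneg. intros; apply Prod_nonneg. }
  assert (Hex : exists i j, (i < n)%nat /\ (j < n)%nat /\ ~ reach n y i j).
  { apply NNPP; intro C; apply Hns; intros i j Hi Hj; apply NNPP; intro Hr; apply C; eauto. }
  destruct Hex as [i [j Hi]].
  destruct Hi as [Hi [Hj Hr]].
  assert (Hij : i <> j). { intro E; subst. apply Hr. constructor; auto. }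
  apply Rle_trans with (Prod i j (ksf n i j) y).
  - right. symmetry. apply Prod_one. intros k Hk. apply In_ksf in Hk. destruct Hk as [Hk [Hki Hkj]].
    unfold D, indic. destruct (excluded_middle_informative _) as [_|Hn]; auto.
    exfalso. apply Hr. apply reach_step with k; auto. lia.
    apply reach_step with j; auto. lia. constructor; auto.
  - apply (lsum_in_le _ (fun p => Prod (fst p) (snd p) (ksf n (fst p) (snd p)) y) (i, j)).
    apply In_offdiag; auto. intros; apply Prod_nonneg.
Qed.

Lemma pow_le_dec q m k : 0 <= q <= 1 -> (m <= k)%nat -> q ^ k <= q ^ m.
Proof.
  intros Hq Hmk. replace k with (m + (k - m))%nat by lia. rewrite pow_add.
  assert (q ^ (k - m) <= 1). { rewrite <- (pow1 (k - m)). apply pow_incr. lra. }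
  assert (0 <= q ^ m) by (apply pow_le; lra). nra.
Qed.

Lemma pow_sub2 q n : 0 <= q <= 1 -> q ^ (n - 2) * q ^ 2 <= q ^ n.
Proof.
  intro Hq. destruct n as [|[|n]].
  - simpl. nra.
  - simpl. nra.
  - replace (S (S n) - 2)%nat with n by lia. rewrite <- pow_add. replace (n + 2)%nat with (S (S n)) by lia. lra.
Qed.

Lemma final_ineq q n : 3/4 <= q < 1 ->
  INR n * INR n * q ^ (n - 2) <=
  16 / (q ^ 2 * (- ln q) ^ 2) * exp (- (- ln q / 2) * INR n).
Proof.
  intros Hq. set (c0 := - ln q).
  assert (Hc0 : 0 < c0). { unfold c0. assert (ln q < ln 1) by (apply ln_increasing; lra). rewrite ln_1 in *. lra. }
  assert (Hqn : q ^ n = exp (- c0 * INR n)).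
  { rewrite <- Rpower_pow by lra. unfold Rpower, c0. f_equal. ring. }
  assert (Hn0 : 0 <= INR n) by apply pos_INR.
  set (t := c0 * INR n / 4).
  assert (Ht : t <= exp t).
  { destruct (Req_dec t 0) as [E|E]. rewrite E, exp_0. lra. pose proof (exp_ineq1 t E). lra. }
  assert (Hn : INR n <= 4 / c0 * exp t).
    { replace (INR n) with (4 / c0 * t) at 1 by (unfold t; field; lra). apply Rmult_le_compat_l; auto. apply Rlt_le, Rdiv_lt_0_compat; lra. }
  assert (Hq2 : 0 < q ^ 2) by (apply pow_lt; lra).
  assert (Hsub : q ^ (n - 2) <= q ^ n / q ^ 2).
  { pose proof (pow_sub2 q n ltac:(lra)). apply Rmult_le_reg_r with (q ^ 2); auto.
    field_simplify; lra. }
  assert (Hexp : exp (- c0 * INR n) = exp (-(4 * t))) by (f_equal; unfold t; field).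
  assert (Hexp2 : exp (- (c0 / 2) * INR n) = exp (-(2 * t))) by (f_equal; unfold t; field).
  fold c0. rewrite Hexp2.
  assert (He1 : exp (-(4 * t)) * (exp t * exp t) = exp (-(2 * t))).
  { rewrite <- !exp_plus. f_equal. ring. }
  assert (0 <= q ^ (n - 2)) by (apply pow_le; lra).
  apply Rle_trans with (INR n * INR n * (q ^ n / q ^ 2)).
  { apply Rmult_le_compat_l; auto. nra. }
  rewrite Hqn, Hexp.
  assert (HnS : INR n * INR n <= (4 / c0 * exp t) * (4 / c0 * exp t)).
  { apply Rmult_le_compat; auto. }
  assert (0 < exp (-(4 * t))) by apply exp_pos.
  apply Rle_trans with ((4 / c0 * exp t) * (4 / c0 * exp t) * (exp (-(4 * t)) / q ^ 2)).
  { apply Rmult_le_compat_r; auto. apply Rlt_le. apply Rdiv_lt_0_compat; auto. }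
  rewrite <- He1. unfold Rdiv. right. field. split; lra.
Qed.
Lemma good_offdiag eps e n mu N : e <= eps -> eps_balanced_digraph eps n mu ->
  goodb mu N e (offdiag_pairs n).
Proof.
  intros Hee H a b Hin. apply In_offdiag in Hin. destruct Hin as [Ha [Hb Hab]].
  destruct (H a b Ha Hb Hab) as [Hp [Hneg Hbal]].
  assert (Hnn : forall z, 0 <= mu a b z) by apply Hp.
  split; auto. split. apply pmf_mass_le; auto.
  specialize (Hbal 2%Z 0%Z prime_2 ltac:(lia) N).
  eapply Rle_trans; [|apply Rle_trans with (1 - eps); [exact Hbal | lra]].
  apply sumZ_le; intro z. destruct (Z.lt_trichotomy z 0) as [Hz|[Hz|Hz]].
  - rewrite Hneg by auto. lra.
  - subst. unfold indic. destruct (excluded_middle_informative (0 < 1)%Z); [|lia].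
    destruct (excluded_middle_informative (Z.modulo 0 2 = 0)%Z); [lra|].
    exfalso; apply n0; reflexivity.
  - pose proof (indic_bounds (Z.modulo z 2 = 0)%Z). unfold indic at 1.
    destruct (excluded_middle_informative (z < 1)%Z); [lia|]. specialize (Hnn z). nra.
Qed.

Theorem mainTheorem8 (eps : R) (Heps : 0 < eps) :
  exists K c : R, 0 < K /\ 0 < c /\
    forall (n : nat) (mu : nat -> nat -> Z -> R),
      eps_balanced_digraph eps n mu ->
      prob_digraph_le n mu (fun x => ~ strongly_connected n x)
                      (K * exp (- c * INR n)).
Proof.
  set (e := Rmin eps (1/2)).
  assert (He : 0 < e <= 1/2) by (unfold e, Rmin; destruct (Rle_dec eps (1/2)); lra).
  assert (Hee : e <= eps) by (unfold e; apply Rmin_l).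
  set (q := 1 - e ^ 2).
  assert (Hq : 3/4 <= q < 1) by (unfold q; simpl; nra).
  assert (Hc0 : 0 < - ln q). { assert (ln q < ln 1) by (apply ln_increasing; lra). rewrite ln_1 in *. lra. }
  exists (16 / (q ^ 2 * (- ln q) ^ 2)), (- ln q / 2).
  split. { apply Rdiv_lt_0_compat. lra. apply Rmult_lt_0_compat; apply pow_lt; lra. }
  split. lra.
  intros n mu Hmu N.
  set (L := offdiag_pairs n).
  assert (Hg : goodb mu N e L) by (exact (good_offdiag eps e n mu N Hee Hmu)).
  assert (Hgp : goodp mu N L) by (exact (goodb_goodp mu N e L Hg)).
  apply Rle_trans with (box_sum mu N L (fun y => lsum L (fun p => Prod (fst p) (snd p) (ksf n (fst p) (snd p)) y)) (fun _ _ => 0%Z)).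
  { apply box_mono; auto. intro y; apply indic_notSC_le. }
  rewrite box_lsum.
  apply Rle_trans with (lsum L (fun _ => q ^ (n - 2))).
  { apply lsum_le_in. intros [i j] Hin. simpl.
    assert (Hin' := Hin). apply In_offdiag in Hin'. destruct Hin' as [Hi [Hj Hij]].
    destruct (perm_split n i j Hi Hj Hij) as [Hperm Hnd].
    unfold L. rewrite (box_perm _ _ _ _ Hperm).
    eapply Rle_trans. apply (block_bound mu N i j e). lra.
    - intros k Hk; apply In_ksf in Hk; lia.
    - intros a b Hab. apply Hg. unfold L. apply Permutation_in with (1 := Permutation_sym Hperm). exact Hab.
    - exact Hnd.
    - apply pow_le_dec. lra. apply length_ksf. }
  rewrite lsum_const.
  apply Rle_trans with (INR n * INR n * q ^ (n - 2)).
  { assert (INR (length L) <= INR n * INR n). { rewrite <- mult_INR. apply le_INR. apply length_offdiag. }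
    assert (0 <= q ^ (n - 2)) by (apply pow_le; lra). nra. }
  apply final_ineq; auto.
Qed.
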